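(* Let $\Omega_1,\dots,\Omega_n$ be formal 1-forms such that $(\nu_\Gamma(\Omega_1),\dots,\nu_\Gamma(\Omega_n))$ is the $\mathbb C[[x]]$-basis of values of $\Gamma$ (i.e. the minimal generating set of $\Lambda_\Gamma$ as a $\mathbb C[[x]]$-collection; it has exactly one element in each residue class modulo $n$, namely the minimum of $\Lambda_\Gamma$ in that class). Then $$\hat\Omega^1(\mathbb C^2,0)=\mathbb C[[x]]\,\Omega_1\oplus\cdots\oplus\mathbb C[[x]]\,\Omega_n\oplus\mathcal I_\Gamma .$$
   Context: $\Gamma$ is a singular irreducible germ of holomorphic curve at $0\in\mathbb C^2$ with Puiseux parametrization $\Gamma(t)=(t^n,\sum_{\beta\ge\beta_1}a_{\beta,\Gamma}t^\beta)$, $n\ge2$. $\hat\Omega^1(\mathbb C^2,0)$ denotes the formal 1-forms $a\,dx+b\,dy$, $a,b\in\mathbb C[[x,y]]$, a $\mathbb C[[x]]$-module. For such $\omega$ with $\Gamma^*\omega=h(t)dt$, $\nu_\Gamma(\omega)=\mathrm{ord}_th+1$ ($\infty$ if $h\equiv0$). $\Lambda_\Gamma=\{\nu_\Gamma(\omega)\}\setminus\{\infty\}$ over holomorphic 1-forms $\omega$. A $\mathbb C[[x]]$-collection is $S\subset\mathbb Z_{>0}$ with $S+n\mathbb Z_{\ge0}\subset S$. $\mathcal I_\Gamma=\{\omega\in\hat\Omega^1(\mathbb C^2,0):\Gamma^*\omega\equiv0\}$. *)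

(* Defs.v *)
From HB Require Import structures.
From mathcomp Require Import all_boot all_order all_algebra.
From mathcomp Require Import reals Rstruct complex.
Set Implicit Arguments. Unset Strict Implicit. Unset Printing Implicit Defensive.
Import Order.TTheory GRing.Theory Num.Theory.
Local Open Scope ring_scope.

Definition C : numClosedFieldType := (Rdefinitions.R)[i].

Definition ser := nat -> C.

Definition ser_mul (f g : ser) : ser :=
  fun k => \sum_(i < k.+1) f i * g (k - i)%N.

Definition ser_one : ser := fun k => (k == 0%N)%:R.

Definition ser_pow (f : ser) (j : nat) : ser := iter j (ser_mul f) ser_one.

Definition ser_mono (m : nat) : ser := fun k => (k == m)%:R.

Definition ser_deriv (f : ser) : ser := fun k => f k.+1 *+ k.+1.

Definition ser2 := nat -> nat -> C.   (* a i j = coefficient of x^i y^j *)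

(* substitution a(t^n, phi(t)), for phi(0) = 0 and n >= 1: the coefficient of
   t^k only involves the finitely many monomials x^i y^j with i, j <= k. *)
Definition ser2_subst (a : ser2) (n : nat) (phi : ser) : ser :=
  fun k => \sum_(i < k.+1) \sum_(j < k.+1)
             a i j * ser_mul (ser_mono (n * i)) (ser_pow phi j) k.

Definition convergent2 (a : ser2) : Prop :=
  exists c r : Rdefinitions.R, 0 < c /\ 0 < r /\
    forall i j, `|a i j| <= (((c * r ^+ (i + j))%:C)%C : C).

Definition convergent1 (f : ser) : Prop :=
  exists c r : Rdefinitions.R, 0 < c /\ 0 < r /\
    forall k, `|f k| <= (((c * r ^+ k)%:C)%C : C).

(* ---------- formal 1-forms  a dx + b dy ---------- *)
Definition form1 := (ser2 * ser2)%type.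

Definition holomorphic_form (w : form1) : Prop :=
  convergent2 w.1 /\ convergent2 w.2.

Definition xsmul (f : ser) (a : ser2) : ser2 :=
  fun i j => \sum_(k < i.+1) f k * a (i - k)%N j.

Definition form_add (w1 w2 : form1) : form1 :=
  (fun i j => w1.1 i j + w2.1 i j, fun i j => w1.2 i j + w2.2 i j).

Definition form_comb (n : nat) (f : 'I_n -> ser) (Om : 'I_n -> form1) : form1 :=
  (fun i j => \sum_(k < n) xsmul (f k) (Om k).1 i j,
   fun i j => \sum_(k < n) xsmul (f k) (Om k).2 i j).

(* Puiseux parametrization of a singular irreducible germ:
   phi(t) = sum_{beta >= beta1} a_beta t^beta, a_beta1 <> 0, n does not divide
   beta1, beta1 > n >= 2, phi convergent, and the parametrization is primitive
   (gcd of n and the support of phi is 1). *)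
Definition puiseux_param (n : nat) (phi : ser) (beta1 : nat) : Prop :=
  [/\ (2 <= n)%N, convergent1 phi,
      (forall b, (b < beta1)%N -> phi b = 0) & phi beta1 != 0] /\
  [/\ ~~ (n %| beta1)%N, (n < beta1)%N &
      (forall d, (1 < d)%N -> (d %| n)%N -> exists b, phi b != 0 /\ ~~ (d %| b)%N)].

(* Gamma^* (a dx + b dy) = h(t) dt with
   h = a(t^n,phi) * n t^(n-1) + b(t^n,phi) * phi'(t) *)
Definition pullback (n : nat) (phi : ser) (w : form1) : ser :=
  fun k => ser_mul (ser2_subst w.1 n phi) (ser_mono n.-1) k *+ n
           + ser_mul (ser2_subst w.2 n phi) (ser_deriv phi) k.

(* nu_Gamma(w) = m  (finite), i.e. ord_t h = m - 1 *)
Definition nu_eq (n : nat) (phi : ser) (w : form1) (m : nat) : Prop :=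
  [/\ (0 < m)%N, pullback n phi w m.-1 != 0 &
      forall k, (k < m.-1)%N -> pullback n phi w k = 0].

Definition Lambda (n : nat) (phi : ser) (m : nat) : Prop :=
  exists w, holomorphic_form w /\ nu_eq n phi w m.

Definition in_IGamma (n : nat) (phi : ser) (w : form1) : Prop :=
  forall k, pullback n phi w k = 0.

Definition generates (n : nat) (S L : nat -> Prop) : Prop :=
  forall m, L m <-> exists b q, S b /\ m = (b + n * q)%N.

Definition cx_basis (n : nat) (S L : nat -> Prop) : Prop :=
  generates n S L /\
  forall S' : nat -> Prop, (forall m, S' m -> S m) -> generates n S' L ->
    forall m, S m -> S' m.

(* Main.v *)
Require Import Defs.
From HB Require Import structures.
From mathcomp Require Import all_boot all_order all_algebra.
From mathcomp Require Import reals Rstruct complex.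
From mathcomp Require Import zify.
From Stdlib Require Import FunctionalExtensionality.
Import Order.TTheory GRing.Theory Num.Theory.
Local Open Scope ring_scope.

Lemma sum_nat_shrink (F : nat -> C) K B : (K <= B)%N ->
  (forall i, (K <= i < B)%N -> F i = 0) ->
  \sum_(0 <= i < B) F i = \sum_(0 <= i < K) F i.
Proof.
move=> hKB h0; rewrite (@big_cat_nat _ _ _ K 0 B) //=.
have -> : \sum_(K <= i < B) F i = 0.
  by rewrite big_nat_cond; apply: big1 => i /andP[hi _]; exact: h0.
by rewrite addr0.
Qed.

Lemma mono_mul m g k : ser_mul (ser_mono m) g k = if (m <= k)%N then g (k - m)%N else 0.
Proof.
rewrite /ser_mul -(big_mkord xpredT (fun i => ser_mono m i * g (k - i)%N)).
case: ifP => h.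
  rewrite (@sum_nat_shrink _ m.+1) //; last first.
    move=> i /andP[hi _]; rewrite /ser_mono; have hne : (i == m) = false by lia.
    by rewrite hne mul0r.
  rewrite big_nat_recr //= big_nat_cond big1 ?add0r; first by rewrite /ser_mono eqxx mul1r.
  move=> i /andP[/andP[_ hi] _]; rewrite /ser_mono; have hne : (i == m) = false by lia.
  by rewrite hne mul0r.
rewrite big_nat_cond big1 // => i /andP[/andP[_ hi] _].
rewrite /ser_mono; have hne : (i == m) = false by lia.
  by rewrite hne mul0r.
Qed.

Lemma pow_low phi (phi0 : phi 0%N = 0) j m : (m < j)%N -> ser_pow phi j m = 0.
Proof.
elim: j m => [//|j IH] m hm.
rewrite /ser_pow /= -/(ser_pow phi j) /ser_mul big1 // => i _.
case: (nat_of_ord i) (ltn_ord i) => [|i'] hi; first by rewrite phi0 mul0r.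
by rewrite IH ?mulr0 //; lia.
Qed.

Lemma T_zero n phi (phi0 : phi 0%N = 0) (n0 : (0 < n)%N) i j k :
  ((k < i) || (k < j))%N -> ser_mul (ser_mono (n * i)) (ser_pow phi j) k = 0.
Proof.
move=> h; rewrite mono_mul; case: ifP => // hi.
have := leq_pmull i n0 => hni; apply: pow_low => //; lia.
Qed.

Lemma subst_bound n phi (phi0 : phi 0%N = 0) (n0 : (0 < n)%N) a K B1 B2 :
  (K < B1)%N -> (K < B2)%N ->
  ser2_subst a n phi K = \sum_(0 <= i < B1) \sum_(0 <= j < B2)
      a i j * ser_mul (ser_mono (n * i)) (ser_pow phi j) K.
Proof.
move=> h1 h2; rewrite /ser2_subst (@sum_nat_shrink _ K.+1) //; last first.
  move=> i /andP[hi _]; rewrite big1 // => j _; rewrite T_zero ?mulr0 //; lia.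
rewrite big_mkord; apply: eq_bigr => i _.
rewrite (@sum_nat_shrink _ K.+1) //; last first.
  move=> j /andP[hj _]; rewrite T_zero ?mulr0 //; lia.
by rewrite big_mkord.
Qed.

Lemma xsmul_mono q a i j : xsmul (ser_mono q) a i j = if (q <= i)%N then a (i - q)%N j else 0.
Proof. exact: (mono_mul q (fun l => a l j) i). Qed.

Lemma subst_shift n phi (phi0 : phi 0%N = 0) (n0 : (0 < n)%N) a q K :
  ser2_subst (xsmul (ser_mono q) a) n phi K =
  if (n * q <= K)%N then ser2_subst a n phi (K - n * q)%N else 0.
Proof.
rewrite (@subst_bound _ _ _ _ _ _ (K.+1 + q) K.+1) //; last by lia.
case: ifP => hq.
  rewrite (@subst_bound _ _ _ _ _ _ (K.+1) K.+1) //; try lia.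
  rewrite (@big_cat_nat _ _ _ q 0 (K.+1 + q)) //=; last by lia.
  rewrite big_nat_cond big1 ?add0r; last first.
    move=> i /andP[/andP[_ hi] _]; apply: big1 => j _.
    rewrite xsmul_mono ifF ?mul0r //; lia.
  rewrite -{1}(add0n q) big_addn.
  have -> : (K.+1 + q - q = K.+1)%N by lia.
  apply: eq_bigr => i _; apply: eq_bigr => j _.
  rewrite xsmul_mono ifT; last by lia.
  rewrite !mono_mul addnK.
  case: ifP => h; case: ifP => h' //; try lia.
  by have -> : (K - n * (i + q) = K - n * q - n * i)%N by lia.
rewrite big_nat_cond big1 // => i _; apply: big1 => j _.
rewrite xsmul_mono; case: ifP => hi; last by rewrite mul0r.
have hh : (n * q <= n * i)%N by rewrite leq_mul2l hi orbT.
by rewrite mono_mul ifF ?mulr0 //; lia.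
Qed.

Lemma ser_mul_ext (s s' g : ser) k : (forall i, (i <= k)%N -> s i = s' i) ->
  ser_mul s g k = ser_mul s' g k.
Proof. by move=> h; apply: eq_bigr => i _; rewrite h // -ltnS. Qed.

Lemma mul_shift (s s' g : ser) m k :
  (forall i, s i = if (m <= i)%N then s' (i - m)%N else 0) ->
  ser_mul s g k = if (m <= k)%N then ser_mul s' g (k - m)%N else 0.
Proof.
move=> hs; rewrite /ser_mul -(big_mkord xpredT (fun i => s i * g (k - i)%N)).
case: ifP => hm.
  rewrite (@big_cat_nat _ _ _ m 0 k.+1) //=; last by lia.
  rewrite big_nat_cond big1 ?add0r; last first.
    by move=> i /andP[/andP[_ hi] _]; rewrite hs ifF ?mul0r //; lia.
  rewrite -{1}(add0n m) big_addn.
  have -> : (k.+1 - m = (k - m).+1)%N by lia.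
  rewrite -(big_mkord xpredT (fun i => s' i * g (k - m - i)%N)).
  apply: eq_bigr => i _; rewrite hs ifT; last by lia.
  by rewrite addnK; have -> : (k - (i + m) = k - m - i)%N by lia.
rewrite big_nat_cond big1 // => i /andP[/andP[_ hi] _]; rewrite hs ifF ?mul0r //; lia.
Qed.

Definition xq (q : nat) (w : form1) : form1 :=
  (xsmul (ser_mono q) w.1, xsmul (ser_mono q) w.2).

Lemma pull_shift n phi (phi0 : phi 0%N = 0) (n0 : (0 < n)%N) w q N :
  pullback n phi (xq q w) N =
  if (n * q <= N)%N then pullback n phi w (N - n * q)%N else 0.
Proof.
rewrite /pullback /=.
rewrite (@mul_shift (ser2_subst (xsmul (ser_mono q) w.1) n phi) (ser2_subst w.1 n phi) _ (n * q)); last by move=> i; rewrite subst_shift.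
rewrite (@mul_shift (ser2_subst (xsmul (ser_mono q) w.2) n phi) (ser2_subst w.2 n phi) _ (n * q)); last by move=> i; rewrite subst_shift.
by case: ifP => //; rewrite mul0rn addr0.
Qed.

Lemma pull_local n phi w w' N :
  (forall i j, (i <= N)%N -> (j <= N)%N -> w.1 i j = w'.1 i j /\ w.2 i j = w'.2 i j) ->
  pullback n phi w N = pullback n phi w' N.
Proof.
move=> h; rewrite /pullback.
have e : forall b : bool, forall i, (i <= N)%N ->
   ser2_subst (if b then w.1 else w.2) n phi i = ser2_subst (if b then w'.1 else w'.2) n phi i.
  move=> b i hi; apply: eq_bigr => i1 _; apply: eq_bigr => j1 _.
  have hi1 := ltn_ord i1; have hj1 := ltn_ord j1.
  have [e1 e2] := h i1 j1 ltac:(lia) ltac:(lia).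
  by case: b; rewrite /= ?e1 ?e2.
congr (_ *+ _ + _); apply: ser_mul_ext => i hi; [exact: (e true) | exact: (e false)].
Qed.

Lemma subst_lin n phi (I : Type) (r : seq I) (c : I -> C) (A : I -> ser2) K :
  ser2_subst (fun i j => \sum_(k <- r) c k * A k i j) n phi K =
  \sum_(k <- r) c k * ser2_subst (A k) n phi K.
Proof.
rewrite /ser2_subst.
transitivity (\sum_(i < K.+1) \sum_(j < K.+1) \sum_(k <- r)
   c k * (A k i j * ser_mul (ser_mono (n * i)) (ser_pow phi j) K)).
  apply: eq_bigr => i _; apply: eq_bigr => j _; rewrite mulr_suml.
  by apply: eq_bigr => k _; rewrite mulrA.
under eq_bigr do rewrite exchange_big.
rewrite exchange_big; apply: eq_bigr => k _; rewrite mulr_sumr.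
by apply: eq_bigr => i _; rewrite mulr_sumr.
Qed.

Lemma mul_lin (I : Type) (r : seq I) (c : I -> C) (S : I -> ser) g k :
  ser_mul (fun i => \sum_(l <- r) c l * S l i) g k =
  \sum_(l <- r) c l * ser_mul (S l) g k.
Proof.
rewrite /ser_mul.
transitivity (\sum_(i < k.+1) \sum_(l <- r) c l * (S l i * g (k - i)%N)).
  by apply: eq_bigr => i _; rewrite mulr_suml; apply: eq_bigr => l _; rewrite mulrA.
rewrite exchange_big; apply: eq_bigr => l _; by rewrite mulr_sumr.
Qed.

Lemma pull_lin n phi (I : Type) (r : seq I) (c : I -> C) (W : I -> form1) N :
  pullback n phi (fun i j => \sum_(k <- r) c k * (W k).1 i j,
                  fun i j => \sum_(k <- r) c k * (W k).2 i j) N =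
  \sum_(k <- r) c k * pullback n phi (W k) N.
Proof.
rewrite /pullback /=.
rewrite (@ser_mul_ext _ (fun K => \sum_(k <- r) c k * ser2_subst (W k).1 n phi K)); last first.
  by move=> i _; rewrite subst_lin.
rewrite (@ser_mul_ext (ser2_subst _ n phi) (fun K => \sum_(k <- r) c k * ser2_subst (W k).2 n phi K)); last first.
  by move=> i _; rewrite subst_lin.
rewrite !mul_lin -sumrMnl -big_split /=; apply: eq_bigr => k _.
by rewrite mulrDr mulrnAr.
Qed.

Lemma pull_add n phi w1 w2 N :
  pullback n phi (form_add w1 w2) N = pullback n phi w1 N + pullback n phi w2 N.
Proof.
pose W := fun b : bool => if b then w1 else w2.
transitivity (\sum_(k <- [:: true; false]) 1 * pullback n phi (W k) N); last first.
  by rewrite !big_cons big_nil !mul1r addr0.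
rewrite -pull_lin; apply: pull_local => i j _ _.
by split; rewrite /= !big_cons big_nil /= !mul1r !addr0.
Qed.

Lemma pull_sub n phi w1 w2 N :
  pullback n phi (fun i j => w1.1 i j - w2.1 i j, fun i j => w1.2 i j - w2.2 i j) N
  = pullback n phi w1 N - pullback n phi w2 N.
Proof.
pose W := fun b : bool => if b then w1 else w2.
transitivity (\sum_(k <- [:: true; false]) (if k then 1 else -1) * pullback n phi (W k) N); last first.
  by rewrite !big_cons big_nil /= mul1r mulN1r addr0.
rewrite -pull_lin; apply: pull_local => i j _ _.
by split; rewrite /= !big_cons big_nil /= !mul1r !mulN1r !addr0.
Qed.

Lemma sum_widen (G : nat -> C) i N : (i <= N)%N ->
  \sum_(l < i.+1) G l = \sum_(l < N.+1) (if (l <= i)%N then G l else 0).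
Proof.
move=> h; rewrite (big_ord_widen N.+1 G) ?ltnS // big_mkcond.
by apply: eq_bigr => l _; rewrite ltnS.
Qed.

Lemma pull_comb n phi (phi0 : phi 0%N = 0) (n0 : (0 < n)%N) (Om : 'I_n -> form1)
  (F : 'I_n -> ser) N :
  pullback n phi (form_comb F Om) N =
  \sum_(k < n) \sum_(l < N.+1) F k l * pullback n phi (xq l (Om k)) N.
Proof.
transitivity (pullback n phi
  (fun i j => \sum_(p : 'I_n * 'I_N.+1) F p.1 p.2 * (xq p.2 (Om p.1)).1 i j,
   fun i j => \sum_(p : 'I_n * 'I_N.+1) F p.1 p.2 * (xq p.2 (Om p.1)).2 i j) N).
  apply: pull_local => i j hi hj.
  split; rewrite /=.
    rewrite -(pair_bigA _ (fun k (l : 'I_N.+1) => F k l * (xq l (Om k)).1 i j)) /=.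
    apply: eq_bigr => k _; rewrite /xq /=; under [RHS]eq_bigr do rewrite xsmul_mono.
  rewrite /xsmul (@sum_widen (fun l => F k l * (Om k).1 (i - l)%N j) i N hi); apply: eq_bigr => l _.
    by case: ifP; rewrite ?mulr0.
  rewrite -(pair_bigA _ (fun k (l : 'I_N.+1) => F k l * (xq l (Om k)).2 i j)) /=.
  apply: eq_bigr => k _; rewrite /xq /=; under [RHS]eq_bigr do rewrite xsmul_mono.
  rewrite /xsmul (@sum_widen (fun l => F k l * (Om k).2 (i - l)%N j) i N hi); apply: eq_bigr => l _.
  by case: ifP; rewrite ?mulr0.
rewrite (@pull_lin n phi _ (index_enum _)).
by rewrite -(pair_bigA _ (fun k (l : 'I_N.+1) => F k l * pullback n phi (xq l (Om k)) N)).
Qed.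

Definition nr (z : C) : Rdefinitions.R := Num.sqrt ((complex.Re z)^+2 + (complex.Im z)^+2).

Lemma nr_ge0 z : 0 <= nr z. Proof. exact: sqrtr_ge0. Qed.

Lemma norm_nr (z : C) : `|z| = ((nr z)%:C)%C.
Proof. exact: normc_def. Qed.

Lemma le_sum_ord M (G : 'I_M -> Rdefinitions.R) (i0 : 'I_M) :
  (forall i, 0 <= G i) -> G i0 <= \sum_(i < M) G i.
Proof.
move=> h; rewrite (bigD1 i0) //= lerDl; exact: sumr_ge0.
Qed.

Lemma conv_trunc (a : ser2) N :
  convergent2 (fun i j => if (i <= N)%N && (j <= N)%N then a i j else 0).
Proof.
set c := 1 + \sum_(i < N.+1) \sum_(j < N.+1) nr (a i j).
have c0 : 0 < c by rewrite /c ltr_pwDl // sumr_ge0 // => i _; rewrite sumr_ge0 // => j _; exact: nr_ge0.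
exists c, 1; split => //; split => // i j.
rewrite expr1n mulr1.
case: ifP => h; last by rewrite normr0 ler0c ltW.
rewrite norm_nr lecR.
have hi : (i < N.+1)%N by lia.
have hj : (j < N.+1)%N by lia.
suff H : nr (a i j) <= \sum_(i < N.+1) \sum_(j < N.+1) nr (a i j).
  by apply: (le_trans H); rewrite /c lerDr ler01.
have hG : forall i1 : 'I_N.+1, 0 <= \sum_(j < N.+1) nr (a i1 j).
  by move=> i1; apply: sumr_ge0 => j1 _; exact: nr_ge0.
have H1 := @le_sum_ord N.+1 (fun i : 'I_N.+1 => \sum_(j < N.+1) nr (a i j)) (Ordinal hi) hG.
have H2 := @le_sum_ord N.+1 (fun j : 'I_N.+1 => nr (a i j)) (Ordinal hj) (fun _ => nr_ge0 _).
exact: (le_trans H2 H1).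
Qed.

Lemma lambda_res n phi (w : form1) (Om : 'I_n -> form1) F N :
  pullback n phi w N - pullback n phi (form_comb F Om) N != 0 ->
  (forall m, (m < N)%N -> pullback n phi w m - pullback n phi (form_comb F Om) m = 0) ->
  Lambda n phi N.+1.
Proof.
move=> hN hlt.
set wd : form1 := (fun i j => w.1 i j - (form_comb F Om).1 i j,
                   fun i j => w.2 i j - (form_comb F Om).2 i j).
have Pd m : pullback n phi wd m = pullback n phi w m - pullback n phi (form_comb F Om) m.
  exact: pull_sub.
set wt : form1 := (fun i j => if (i <= N)%N && (j <= N)%N then wd.1 i j else 0,
                   fun i j => if (i <= N)%N && (j <= N)%N then wd.2 i j else 0).
have Pt m : (m <= N)%N -> pullback n phi wt m = pullback n phi wd m.
  move=> hm; apply: pull_local => i j hi hj.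
  have hh : ((i <= N) && (j <= N))%N by apply/andP; split; lia.
  by rewrite /wt /= hh.
exists wt; split; first by split; exact: conv_trunc.
split => //=; first by rewrite Pt // Pd.
by move=> k hk; rewrite Pt ?Pd; [exact: hlt | lia].
Qed.

Lemma lam_res n (lam : 'I_n -> nat) (L : nat -> Prop) :
  cx_basis n (fun m => exists k, lam k = m) L ->
  forall k k', (lam k < lam k')%N -> lam k = lam k' %[mod n] -> False.
Proof.
move=> [hgen hmin] k k' hlt hmod.
pose S' := fun m => (exists k0, lam k0 = m) /\ m <> lam k'.
suff : S' (lam k') by case.
apply: (hmin S') => //; first by move=> m [].
  2: by exists k'.
move=> m; rewrite hgen; split.
  move=> [b [q [[k0 e] hm]]].
  case: (eqVneq b (lam k')) => hb.
    have : (lam k' == lam k %[mod n]) by rewrite hmod.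
    rewrite eqn_mod_dvd; last by lia.
    case/dvdnP => d hd.
    exists (lam k), (d + q); split; first by split; [exists k | lia].
    rewrite hm hb; lia.
  by exists b, q; split => //; split; [exists k0 | exact/eqP].
by move=> [b [q [[hS _] hm]]]; exists b, q.
Qed.

Definition resid n phi w (Om : 'I_n -> form1) (F : 'I_n -> ser) N :=
  pullback n phi w N - pullback n phi (form_comb F Om) N.

Definition upd n (F : 'I_n -> ser) (k : 'I_n) (q : nat) (c : C) : 'I_n -> ser :=
  fun k' l => F k' l + (if (k' == k) && (l == q) then c else 0).
Arguments upd {n}.

Lemma pull_upd n phi (phi0 : phi 0%N = 0) (n0 : (0 < n)%N) (Om : 'I_n -> form1)
  F k q c m :
  pullback n phi (form_comb (upd F k q c) Om) m =
  pullback n phi (form_comb F Om) m +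
  (if (q <= m)%N then c * pullback n phi (xq q (Om k)) m else 0).
Proof.
rewrite !pull_comb //.
transitivity (\sum_(k' < n) \sum_(l < m.+1) F k' l * pullback n phi (xq l (Om k')) m +
  \sum_(k' < n) \sum_(l < m.+1) (if (k' == k) && (l == q :> nat) then c else 0) *
      pullback n phi (xq l (Om k')) m).
  rewrite -big_split; apply: eq_bigr => k' _; rewrite -big_split; apply: eq_bigr => l _.
  by rewrite /upd mulrDl.
congr (_ + _).
rewrite (bigD1 k) //=.
rewrite [X in _ + X](_ : _ = 0) ?addr0; last first.
  by apply: big1 => k' hk'; apply: big1 => l _; rewrite (negbTE hk') mul0r.
case: ifP => hq.
  have hq' : (q < m.+1)%N by lia.
  rewrite (bigD1 (Ordinal hq')) //= ?eqxx /=.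
  rewrite [X in _ + X](_ : _ = 0) ?addr0 //.
  apply: big1 => l hl; rewrite ?eqxx /= ifF ?mul0r //.
  apply/eqP => e; move/eqP: hl; apply; exact: val_inj.
apply: big1 => l _; rewrite ?eqxx /= ifF ?mul0r //.
have := ltn_ord l; lia.
Qed.

Definition step n phi w (Om : 'I_n -> form1) (lam : 'I_n -> nat) N (F : 'I_n -> ser) :=
  if [pick k | (lam k <= N.+1)%N && (n %| N.+1 - lam k)%N] is Some k
  then upd F k ((N.+1 - lam k) %/ n)
         (resid n phi w Om F N / pullback n phi (Om k) (lam k).-1)
  else F.

Fixpoint Fs n phi w (Om : 'I_n -> form1) (lam : 'I_n -> nat) N : 'I_n -> ser :=
  if N is N'.+1 then step n phi w Om lam N' (Fs n phi w Om lam N')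
  else fun _ _ => 0.

Lemma Fs_inv n phi (phi0 : phi 0%N = 0) (n0 : (0 < n)%N) w (Om : 'I_n -> form1)
  (lam : 'I_n -> nat) :
  (forall k, nu_eq n phi (Om k) (lam k)) ->
  (forall m, Lambda n phi m -> exists k q, (lam k + n * q)%N = m) ->
  forall N m, (m < N)%N -> resid n phi w Om (Fs n phi w Om lam N) m = 0.
Proof.
move=> hnu hgen; elim => [//|N IH] m hm /=.
rewrite /step; case: pickP => [k /andP[hk hdiv] | hnone].
  set q := ((N.+1 - lam k) %/ n)%N.
  set F := Fs n phi w Om lam N.
  have hnq : (n * q = N.+1 - lam k)%N by rewrite /q mulnC divnK.
  clearbody q.
  have [lk0 hc0 hlow] := hnu k.
  rewrite /resid pull_upd // pull_shift //.
  have hqn : (q <= n * q)%N by apply: leq_pmull.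
  case: (ltngtP m N) => hmN; [ | lia | ].
    case: ifP => hq1; last by rewrite addr0; exact: (IH _ hmN).
    case: ifP => hq2; last by rewrite mulr0 addr0; exact: (IH _ hmN).
    rewrite (hlow (m - n * q)%N) ?mulr0 ?addr0; [exact: (IH _ hmN) | lia].
  subst m.
  rewrite ifT; last by lia.
  rewrite ifT; last by lia.
  have -> : (N - n * q = (lam k).-1)%N by lia.
  rewrite divfK // /resid.
  by rewrite (addrC (pullback n phi (form_comb F Om) N)) subrK subrr.
case: (ltngtP m N) => hmN; [ exact: (IH _ hmN) | lia | ].
subst m.
case: (eqVneq (resid n phi w Om (Fs n phi w Om lam N) N) 0) => // hr.
have [k [q e]] := hgen _ (@lambda_res n phi w Om _ N hr IH).
have := hnone k.
have -> : (lam k <= N.+1)%N by lia.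
have -> : (N.+1 - lam k = n * q)%N by lia.
by rewrite dvdn_mulr.
Qed.

Lemma Fs_stable n phi w (Om : 'I_n -> form1) (lam : 'I_n -> nat) L
  (hL : forall k, (lam k <= L)%N) (n0 : (0 < n)%N) k l N :
  (n * l + L <= N)%N -> Fs n phi w Om lam N.+1 k l = Fs n phi w Om lam N k l.
Proof.
move=> h /=; rewrite /step; case: pickP => // k0 /andP[hk hd].
rewrite /upd.
have hnq : (n * ((N.+1 - lam k0) %/ n) = N.+1 - lam k0)%N by rewrite mulnC divnK.
have hne : (l == (N.+1 - lam k0) %/ n)%N = false.
  apply/eqP => e; move: hnq; rewrite -e => hnq; have := hL k0; lia.
by rewrite hne andbF addr0.
Qed.

Lemma Fs_stable2 n phi w (Om : 'I_n -> form1) (lam : 'I_n -> nat) L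
  (hL : forall k, (lam k <= L)%N) (n0 : (0 < n)%N) k l d :
  Fs n phi w Om lam (n * l + L + d) k l = Fs n phi w Om lam (n * l + L) k l.
Proof.
elim: d => [|d IH]; first by rewrite addn0.
by rewrite addnS (@Fs_stable _ _ _ _ _ L) // leq_addr.
Qed.

Theorem mainTheorem4 (n : nat) (phi : ser) (beta1 : nat)
  (Om : 'I_n -> form1) (lam : 'I_n -> nat) :
  puiseux_param n phi beta1 ->
  injective lam ->
  (forall k, nu_eq n phi (Om k) (lam k)) ->
  cx_basis n (fun m => exists k, lam k = m) (Lambda n phi) ->
  (* existence of a decomposition *)
  (forall w : form1, exists (f : 'I_n -> ser) (eta : form1),
      in_IGamma n phi eta /\ w = form_add (form_comb f Om) eta) /\
  (* uniqueness: the sum is direct *)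
  (forall (f g : 'I_n -> ser) (eta eta' : form1),
      in_IGamma n phi eta -> in_IGamma n phi eta' ->
      form_add (form_comb f Om) eta = form_add (form_comb g Om) eta' ->
      f = g /\ eta = eta').
Proof.
move=> hP hinj hnu hbasis.
have [[n2 _ hlow0 _] [_ hbn _]] := hP.
have phi0 : phi 0%N = 0 by apply: hlow0; lia.
have n0 : (0 < n)%N by lia.
have hgen : forall m, Lambda n phi m -> exists k q, (lam k + n * q)%N = m.
  move=> m hm; have [b [q [[k e] hm']]] := (hbasis.1 m).1 hm.
  by exists k, q; rewrite hm' e.
split.
  move=> w.
  set L := (\max_(k : 'I_n) lam k)%N.
  have hL : forall k, (lam k <= L)%N by move=> k; exact: leq_bigmax.
  pose f : 'I_n -> ser := fun k l => Fs n phi w Om lam (n * l + L) k l.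
  exists f, (fun i j => w.1 i j - (form_comb f Om).1 i j,
             fun i j => w.2 i j - (form_comb f Om).2 i j).
  split.
    move=> N; rewrite pull_sub.
    set M := (n * N + L + N.+1)%N.
    have e : pullback n phi (form_comb f Om) N =
             pullback n phi (form_comb (Fs n phi w Om lam M) Om) N.
      rewrite !pull_comb //; apply: eq_bigr => k _; apply: eq_bigr => l _; congr (_ * _).
      have hl := ltn_ord l.
      have hnl : (n * l <= n * N)%N by rewrite leq_mul2l; apply/orP; right; lia.
      rewrite /f /M (_ : (n * N + L + N.+1 = n * l + L + (n * N - n * l + N.+1))%N); last by lia.
      by rewrite (@Fs_stable2 _ _ _ _ _ L).
    rewrite e; apply: (@Fs_inv n phi phi0 n0 w Om lam hnu hgen M N); rewrite /M; lia.
  rewrite /form_add /=; case: w f => w1 w2 f /=; congr pair;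
    apply: functional_extensionality => i; apply: functional_extensionality => j;
    by rewrite addrC subrK.
move=> f g eta eta' he he' H.
have hP' N : pullback n phi (form_comb f Om) N = pullback n phi (form_comb g Om) N.
  have := congr1 (fun w => pullback n phi w N) H => /=.
  by rewrite !pull_add he he' !addr0.
pose D k l := f k l - g k l.
have hD N : \sum_(k < n) \sum_(l < N.+1) D k l * pullback n phi (xq l (Om k)) N = 0.
  transitivity (pullback n phi (form_comb f Om) N - pullback n phi (form_comb g Om) N);
    last by rewrite hP' subrr.
  rewrite !pull_comb // -sumrB; apply: eq_bigr => k _; rewrite -sumrB.
  by apply: eq_bigr => l _; rewrite mulrBl.
have fg : f = g.
  apply: functional_extensionality => k; apply: functional_extensionality => l.
  apply/eqP; rewrite -subr_eq0; apply/negPn/negP => hne.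
  pose Pv := fun v => [exists k0 : 'I_n, [exists l0 : 'I_v.+1,
                 (D k0 l0 != 0) && (v == lam k0 + n * l0)%N]].
  have exP : exists v, Pv v.
    exists (lam k + n * l)%N; apply/existsP; exists k.
    have hl : (l < (lam k + n * l).+1)%N by have := leq_pmull l n0; lia.
    by apply/existsP; exists (Ordinal hl); rewrite /= hne eqxx.
  case: (ex_minnP exP) => v /existsP[k0 /existsP[[l0 hl0v] /andP[hD0 /eqP hv]]] hmin.
  simpl in hD0, hv.
  have [lk0 hc0 hlow] := hnu k0.
  have key : forall k1 l1, D k1 l1 != 0 -> (k1 != k0) || (l1 != l0) ->
             (v < lam k1 + n * l1)%N.
    move=> k1 l1 h1 hne1.
    have : (v <= lam k1 + n * l1)%N.
      apply: hmin; apply/existsP; exists k1.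
      have hl1 : (l1 < (lam k1 + n * l1).+1)%N by have := leq_pmull l1 n0; lia.
      by apply/existsP; exists (Ordinal hl1); rewrite /= h1 eqxx.
    rewrite leq_eqVlt => /orP[/eqP e|//]; exfalso.
    case: (eqVneq k1 k0) => hk.
      subst k1; rewrite eqxx /= in hne1.
      have : (n * l1 == n * l0)%N by apply/eqP; lia.
      rewrite eqn_mul2l => /orP[/eqP|/eqP]; [lia | move=> el; by rewrite el eqxx in hne1].
    have hmod : lam k1 = lam k0 %[mod n].
      have : ((lam k1 + n * l1) %% n = (lam k0 + n * l0) %% n)%N by rewrite -e hv.
      by rewrite !(addnC (lam _)) !(mulnC n) !modnMDl.
    have hneq : lam k1 != lam k0 by apply: contra hk => /eqP /hinj ->.
    case: (ltngtP (lam k1) (lam k0)) => hlt.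
    - exact: (@lam_res n lam _ hbasis _ _ hlt hmod).
    - exact: (@lam_res n lam _ hbasis _ _ hlt (esym hmod)).
    - by rewrite hlt eqxx in hneq.
  set N := (lam k0 + n * l0).-1.
  have zt : forall k1 (l1 : nat), (k1 != k0) || (l1 != l0) ->
            D k1 l1 * pullback n phi (xq l1 (Om k1)) N = 0.
    move=> k1 l1 hne1.
    case: (eqVneq (D k1 l1) 0) => [->|h1]; first by rewrite mul0r.
    have hv1 := key _ _ h1 hne1.
    have [lk1 _ hlow1] := hnu k1.
    rewrite pull_shift //; case: ifP => h2; last by rewrite mulr0.
    by rewrite hlow1 ?mulr0 //; rewrite /N; lia.
  have hl0N : (l0 < N.+1)%N by have := leq_pmull l0 n0; rewrite /N; lia.
  have := hD N.
  rewrite (bigD1 k0) //= (bigD1 (Ordinal hl0N)) //=.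
  rewrite [X in _ + X + _](_ : _ = 0); last first.
    apply: big1 => l1 hl1; apply: zt; apply/orP; right.
    by apply: contra hl1 => /eqP e; apply/eqP; apply: val_inj.
  rewrite [X in _ + X](_ : _ = 0); last first.
    apply: big1 => k1 hk1; apply: big1 => l1 _; apply: zt; by rewrite hk1.
  rewrite !addr0 pull_shift // ifT; last by rewrite /N; lia.
  have -> : (N - n * l0 = (lam k0).-1)%N by rewrite /N; lia.
  by move/eqP; rewrite mulf_eq0 (negbTE hD0) (negbTE hc0).
split => //; subst g.
case: eta eta' he he' H => [e1 e2] [e1' e2'] _ _ [] E1 E2.
congr pair; apply: functional_extensionality => i; apply: functional_extensionality => j.
  by have := congr1 (fun h => h i j) E1 => /= /addrI.
by have := congr1 (fun h => h i j) E2 => /= /addrI.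
Qed.
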